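(* Let $L$ be a positive integer and let $\{a_i(k)\}_{i\in\mathbb Z_L}$, $k\in\mathcal K=\mathbb Z_L$, be binary sequences. Let $2\le s\le S$ be integers and $W(s)\ge0$ such that for all distinct keys $k_1,\ldots,k_s\in\mathcal K$ and all bits $b_1,\ldots,b_s$, $|A_{b_1\ldots b_s}(k_1,\ldots,k_s)|\le L/2^s+W(s)$. Let $0<\gamma<1$ with $\gamma L$ an integer, $L'=L+2^sW(s)$, $\gamma'=\gamma L/L'$. Let $\nu^*_{\rm correct}$ be the optimal value of the linear program in the variables $\nu_0,\ldots,\nu_S\ge0$ subject to $\nu_t=\nu_{S-t}$ for all $t$: $$\text{maximize } \sum_{t=0}^{\lfloor S/2\rfloor}\binom{S-1}{t}\nu_t+\sum_{t=\lfloor S/2\rfloor+1}^{S}\binom{S-1}{t-1}\nu_t$$ $$\text{subject to } \sum_{t=0}^{S}\binom{S}{t}\nu_t=\gamma',\qquad \sum_{t=0}^{S-s}\binom{S-s}{t}\nu_{h+t}\le 2^{-s}\ \ (h=0,\ldots,s).$$ Then for every $T\subset\mathbb Z_L$ with $|T|=\gamma L$, every $g:T\to\{0,1\}$ and every $S$ distinct keys $k_1,\ldots,k_S$, $$\min_{1\le i\le S}\bigl|\{j\in T: g(j)=a_j(k_i)\}\bigr|\le n_{\rm correct}(\gamma,\varepsilon):=\nu^*_{\rm correct}L',$$ with $\varepsilon=S/|\mathcal K|$. Consequently, fewer than $S$ keys $k$ satisfy $|\{j\in T:g(j)=a_j(k)\}|>\nu^*_{\rm correct}L'$, so for a uniformly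 random key the number of correctly guessed bits does not exceed $\nu^*_{\rm correct}L'$ with probability at least $1-\varepsilon$.
   Context: $\mathbb Z_L=\{0,\ldots,L-1\}$ is the residue ring modulo $L$. For distinct keys $k_1,\ldots,k_s$ and bits $b_1,\ldots,b_s$, $A_{b_1\ldots b_s}(k_1,\ldots,k_s)=\{i\in\mathbb Z_L: a_i(k_1)=b_1,\ldots,a_i(k_s)=b_s\}$. *)

(* Defs.v *)
From HB Require Import structures.
From mathcomp Require Import all_boot all_order all_algebra.
Set Implicit Arguments. Unset Strict Implicit. Unset Printing Implicit Defensive.
Import Order.TTheory GRing.Theory Num.Theory.
Local Open Scope ring_scope.

(* Binary sequences a_i(k): [a k i] is the bit a_i(k), keys and indices in Z_L = 'I_L. *)

Definition Aset (L s : nat) (a : 'I_L -> 'I_L -> bool)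
  (ks : 'I_s -> 'I_L) (b : 'I_s -> bool) : {set 'I_L} :=
  [set i : 'I_L | [forall j : 'I_s, a (ks j) i == b j]].

Definition ncorrect (L : nat) (a : 'I_L -> 'I_L -> bool) (T : {set 'I_L})
  (g : 'I_L -> bool) (k : 'I_L) : nat :=
  #|[set j in T | g j == a k j]|.

Definition lp_obj (R : numDomainType) (S : nat) (nu : nat -> R) : R :=
  \sum_(0 <= t < (S./2).+1) ('C(S.-1, t))%:R * nu t
  + \sum_((S./2).+1 <= t < S.+1) ('C(S.-1, t.-1))%:R * nu t.

(* LP feasibility (variables nu_0..nu_S; values at indices > S are irrelevant) *)
Definition lp_feasible (R : numFieldType) (S s : nat) (gamma' : R) (nu : nat -> R) : Prop :=
  [/\ (forall t, (t <= S)%N -> 0 <= nu t),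
      (forall t, (t <= S)%N -> nu t = nu (S - t)%N),
      \sum_(0 <= t < S.+1) ('C(S, t))%:R * nu t = gamma' &
      (forall h, (h <= s)%N ->
         \sum_(0 <= t < (S - s).+1) ('C(S - s, t))%:R * nu (h + t)%N <= 1 / 2 ^+ s)].

Definition lp_optimal (R : numFieldType) (S s : nat) (gamma' : R) (nustar : R) : Prop :=
  (exists nu, lp_feasible S s gamma' nu /\ lp_obj S nu = nustar) /\
  (forall nu, lp_feasible S s gamma' nu -> lp_obj S nu <= nustar).

(* Main.v *)
Require Import Defs.
From HB Require Import structures.
From mathcomp Require Import all_boot all_order all_algebra.
From mathcomp Require Import ring lra zify.
Import Order.TTheory GRing.Theory Num.Theory.
Set Implicit Arguments. Unset Strict Implicit. Unset Printing Implicit Defensive.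
Local Open Scope ring_scope.

Lemma bin_mul3 (n m k : nat) : (k <= m)%N -> (m <= n)%N ->
  ('C(n,m) * 'C(m,k) = 'C(n,k) * 'C(n-k, m-k))%N.
Proof.
move=> km mn.
have e1 := bin_fact km. have e2 := bin_fact mn.
have kn : (k <= n)%N by apply: leq_trans km mn.
have mkn : (m - k <= n - k)%N by apply: leq_sub2r.
have e3 := bin_fact mkn. have e4 := bin_fact kn.
have hnm : (n - k - (m - k) = n - m)%N by lia.
rewrite hnm in e3.
have X0 : (0 < k`! * (m-k)`! * (n-m)`!)%N by rewrite !muln_gt0 !fact_gt0.
apply/eqP; rewrite -(eqn_pmul2r X0); apply/eqP.
transitivity (n`!).
  rewrite -e2 -e1; ring.
rewrite -e4 -e3; ring.
Qed.

Lemma split_union (T : finType) (O A B : {set T}) : A \subset O -> B \subset ~: O ->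
  (A :|: B) :&: O = A /\ (A :|: B) :&: ~: O = B.
Proof.
move=> AO BO; split; apply/setP => x; rewrite !inE;
move: (subsetP AO x) (subsetP BO x); rewrite !inE;
case: (x \in A); case: (x \in B); case: (x \in O) => //= H1 H2;
by [have := H1 isT | have := H2 isT].
Qed.

Lemma card_inter (n : nat) (O : {set 'I_n}) (s h : nat) : (h <= s)%N ->
  #|[set I : {set 'I_n} | (#|I| == s) && (#|I :&: O| == h)]| =
  ('C(#|O|, h) * 'C(n - #|O|, s - h))%N.
Proof.
move=> hs.
pose D1 := [set A : {set 'I_n} | A \subset O & #|A| == h].
pose D2 := [set B : {set 'I_n} | B \subset ~: O & #|B| == (s - h)%N].
have c1 : #|D1| = 'C(#|O|,h) by rewrite cards_draws.
have c2 : #|D2| = 'C(n - #|O|, s-h) by rewrite cards_draws cardsCs setCK card_ord.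
rewrite -c1 -c2 -cardsX.
rewrite -(@card_in_imset _ _ (fun p => p.1 :|: p.2) (setX D1 D2)).
  apply: eq_card => I; rewrite inE. apply/andP/imsetP.
    case=> /eqP HI /eqP HIO. exists (I :&: O, I :\: O); last by rewrite setID.
    rewrite !inE /= subsetIr HIO eqxx /=.
    apply/andP; split.
      by apply/subsetP => x; rewrite !inE => /andP[].
    by rewrite -HI -(cardsID O I) HIO addKn.
  case=> [[A B]]; rewrite !inE /= => /andP[/andP[AO /eqP Ah] /andP[BO /eqP Bh]] ->.
  have [HA HB] := split_union AO BO.
  have dis : A :&: B = set0.
    apply/setP=> x; rewrite !inE; move: (subsetP AO x) (subsetP BO x); rewrite !inE.
    by case: (x \in A); case: (x \in B); case: (x \in O) => //= H1 H2; by [have := H1 isT | have := H2 isT].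
  by rewrite HA Ah cardsU dis cards0 subn0 Ah Bh subnKC // !eqxx.
move=> [A1 B1] [A2 B2]; rewrite !inE /= => /andP[/andP[AO1 _] /andP[BO1 _]]
  /andP[/andP[AO2 _] /andP[BO2 _]] E.
have [HA1 HB1] := split_union AO1 BO1.
have [HA2 HB2] := split_union AO2 BO2.
move: E => /= E; congr (_,_); [by rewrite -HA1 E HA2 | by rewrite -HB1 E HB2].
Qed.

Lemma enum_inj (n s : nat) (I : {set 'I_n}) : #|I| = s ->
  exists sg : 'I_s -> 'I_n, injective sg /\ forall l, sg l \in I.
Proof.
move=> HI. exists (fun l => enum_val (cast_ord (esym HI) l)). split.
  by move=> x y /enum_val_inj /cast_ord_inj.
by move=> l; apply: enum_valP.
Qed.

Lemma card_set_pred (T : finType) (p : pred T) : #|[set j | p j]| = (\sum_j (p j : nat))%N.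
Proof.
rewrite -sum1_card big_mkcond /=; apply: eq_bigr => j _; rewrite inE; by case: (p j).
Qed.

Lemma card_swap (I J : finType) (P : I -> J -> bool) :
  (\sum_i #|[set j | P i j]| = \sum_j #|[set i | P i j]|)%N.
Proof.
under eq_bigr do rewrite card_set_pred.
rewrite exchange_big /=; apply: eq_bigr => j _; by rewrite card_set_pred.
Qed.

Lemma dc (R : realFieldType) (L S s h : nat) (a : 'I_L -> 'I_L -> bool)
  (ks : 'I_S -> 'I_L) (B : R) (T : {set 'I_L}) :
 (h <= s)%N -> injective ks ->
 (forall (ks' : 'I_s -> 'I_L) (b : 'I_s -> bool), injective ks' -> (#|Aset a ks' b|)%:R <= B) ->
 \sum_(j in T) ('C(#|[set i | a (ks i) j]|, h) * 'C(S - #|[set i | a (ks i) j]|, s - h))%:R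
   <= ('C(S,s) * 'C(s,h))%:R * B.
Proof.
move=> hs injks HA.
apply: (@le_trans _ _ (\sum_j ('C(#|[set i | a (ks i) j]|, h) * 'C(S - #|[set i | a (ks i) j]|, s - h))%:R)).
  rewrite [leLHS]big_mkcond /=; apply: ler_sum => j _; case: (j \in T) => //.
under eq_bigr => j _ do rewrite -(card_inter [set i | a (ks i) j] hs).
rewrite -natr_sum card_swap natr_sum.
apply: (@le_trans _ _ (\sum_(I : {set 'I_S} | #|I| == s) ('C(s,h)%:R * B))).
  rewrite [leRHS]big_mkcond /=; apply: ler_sum => I _. case: eqP => HI; last first.
    rewrite (_ : [set j | _] = set0) ?cards0 //; apply/setP=> j; rewrite !inE; by case: eqP.
  have [sg [injsg sgI]] := enum_inj HI.
  rewrite (_ : [set j | _] = [set j | #|I :&: [set i | a (ks i) j]| == h]); last by apply/setP => j; rewrite !inE; case: eqP => // /(_ HI).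
  have E : #|[set j | #|I :&: [set i | a (ks i) j]| == h]| =
     (\sum_(Bs : {set 'I_S} | (Bs \subset I) && (#|Bs| == h)) #|[set j | I :&: [set i | a (ks i) j] == Bs]|)%N.
    rewrite card_set_pred. under [RHS]eq_bigr do rewrite card_set_pred.
    rewrite exchange_big /=; apply: eq_bigr => j _.
    case: (boolP (#|I :&: [set i | a (ks i) j]| == h)) => Hc.
      rewrite (bigD1 (I :&: [set i | a (ks i) j])) /=; last by rewrite subsetIl Hc.
      rewrite eqxx big1 ?addn0 // => Bs /andP[_ H]; by rewrite eq_sym (negbTE H).
    rewrite big1 // => Bs /andP[_ /eqP HB]; case: eqP => // E'; move: Hc; by rewrite E' HB eqxx.
  rewrite E natr_sum.
  apply: (@le_trans _ _ (\sum_(Bs : {set 'I_S} | (Bs \subset I) && (#|Bs| == h)) B)).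
    apply: ler_sum => Bs _.
    apply: le_trans (HA (ks \o sg) (fun l => sg l \in Bs) (inj_comp injks injsg)).
    rewrite ler_nat; apply: subset_leq_card; apply/subsetP => j; rewrite !inE => /eqP HB.
    apply/forallP => l /=. by rewrite -HB !inE sgI.
  rewrite (eq_bigl (fun Bs => Bs \in [set Bs : {set 'I_S} | Bs \subset I & #|Bs| == h]));
    last by move=> Bs; rewrite inE.
  by rewrite sumr_const cards_draws HI mulr_natl.
rewrite (eq_bigl (fun I => I \in [set I : {set 'I_S} | #|I| == s])); last by move=> I; rewrite inE.
by rewrite sumr_const card_draws card_ord -[_ *+ _]mulr_natl mulrA -natrM mulnC.
Qed.

Lemma sum_pick (R : realFieldType) n x (F : nat -> R) : (x <= n)%N ->
  \sum_(0 <= t < n.+1) F t * ((x == t) : nat)%:R = F x.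
Proof.
move=> xn.
rewrite (bigD1_seq x) ?mem_index_iota ?iota_uniq //= eqxx mulr1 big1 ?addr0 //.
by move=> t /negbTE; rewrite eq_sym => ->; rewrite mulr0.
Qed.

Lemma tri (n a b : nat) : (b + a <= n)%N ->
  ('C(n,a) * 'C(n-a,b) = 'C(n,b) * 'C(n-b,a))%N.
Proof.
move=> H.
have h1 := bin_mul3 (leq_addl b a) H.
have h2 := bin_mul3 (leq_addr a b) H.
rewrite addnK in h1. rewrite addKn in h2.
rewrite -h1 -h2; congr (_ * _)%N.
by rewrite -bin_sub ?leq_addl // addnK.
Qed.

Lemma shift_id (S s h x : nat) : (h <= x)%N -> (x - h <= S - s)%N -> (h <= s)%N -> (s <= S)%N ->
  ('C(S-s, x-h) * ('C(S,s) * 'C(s,h)) = 'C(x,h) * 'C(S-x,s-h) * 'C(S,x))%N.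
Proof.
move=> hx xhs hs sS.
have xS : (x <= S)%N by lia.
have E1 := bin_mul3 hs sS. have E2 := bin_mul3 hx xS.
have E3 : ('C(S-h,s-h) * 'C(S-s,x-h) = 'C(S-h,x-h) * 'C(S-x,s-h))%N.
  have := @tri (S - h) (s - h) (x - h).
  have -> : (S - h - (s - h) = S - s)%N by lia.
  have -> : (S - h - (x - h) = S - x)%N by lia.
  move=> ->; lia.
transitivity ('C(S-s,x-h) * ('C(S,h)*'C(S-h,s-h)))%N; first by rewrite E1.
transitivity ('C(S,h) * ('C(S-h,s-h)*'C(S-s,x-h)))%N; first ring.
rewrite E3.
transitivity ('C(S-x,s-h) * ('C(S,h) * 'C(S-h,x-h)))%N; first ring.
rewrite -E2; ring.
Qed.

Lemma shift_pick (R : realFieldType) (S s h x : nat) : (h <= s)%N -> (s <= S)%N -> (x <= S)%N ->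
  \sum_(0 <= t < (S - s).+1) ('C(S-s,t)%:R / 'C(S,(h+t)%N)%:R) * ((x == (h + t)%N) : nat)%:R
  = ('C(x,h) * 'C(S-x,s-h))%:R / ('C(S,s) * 'C(s,h))%:R :> R.
Proof.
move=> hs sS xS.
have nz (n m : nat) : (m <= n)%N -> 'C(n,m)%:R != 0 :> R.
  by move=> mn; rewrite pnatr_eq0 -lt0n bin_gt0.
case: (boolP ((h <= x) && (x - h <= S - s))%N) => [/andP[hx xhs] | Hn].
  rewrite (bigD1_seq (x - h)%N) ?mem_index_iota ?iota_uniq //=.
  rewrite !(subnKC hx) eqxx mulr1 big1 ?addr0; last first.
    move=> t /negbTE Ht. case: eqP => [E|_]; last by rewrite mulr0.
    by move: Ht; rewrite E addKn eqxx.
  apply/eqP; rewrite eqr_div ?nz //; last by rewrite natrM mulf_neq0 ?nz.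
  by rewrite -!natrM eqr_nat (shift_id hx xhs hs sS).
rewrite big_nat big1; last first.
  move=> t /andP[_ tlt]; case: eqP => [E|_]; last by rewrite mulr0.
  by move: Hn; rewrite E leq_addr addKn -ltnS tlt.
case: (ltnP x h) => xh; first by rewrite bin_small // mul0n mul0r.
have lt : (S - s < x - h)%N by move: Hn; rewrite xh /= -ltnNge.
rewrite (@bin_small (S-x)) ?muln0 ?mul0r //; lia.
Qed.

Definition ef (R : realFieldType) (S w t : nat) : R :=
  ((w == t) : nat)%:R + (((S - w)%N == t) : nat)%:R.
Definition nuf (R : realFieldType) (L : nat) (T : {set 'I_L}) (w : 'I_L -> nat)
  (S : nat) (L' : R) (t : nat) : R :=
  (\sum_(j in T) ef R S (w j) t) / (2 * 'C(S,t)%:R * L').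

Lemma sum_nu (R : realFieldType) L (T : {set 'I_L}) w S (L' : R) (r : seq nat)
  (c : nat -> R) (phi : nat -> nat) :
  \sum_(t <- r) c t * nuf T w S L' (phi t) =
  (2 * L')^-1 * \sum_(j in T) \sum_(t <- r) (c t / 'C(S, phi t)%:R) * ef R S (w j) (phi t).
Proof.
rewrite /nuf. under eq_bigr do rewrite mulr_suml mulr_sumr.
rewrite exchange_big /= mulr_sumr; apply: eq_bigr => j _.
rewrite mulr_sumr; apply: eq_bigr => t _.
rewrite !invfM; ring.
Qed.

Definition coef (R : realFieldType) S t : R :=
  if (t <= S./2)%N then 'C(S.-1,t)%:R else 'C(S.-1,t.-1)%:R.

Lemma obj_eq (R : realFieldType) S (nu : nat -> R) :
  lp_obj S nu = \sum_(0 <= t < S.+1) coef R S t * nu t.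
Proof.
rewrite /lp_obj [RHS](@big_cat_nat _ _ _ (S./2).+1) //=; last first.
  by rewrite ltnS -divn2; lia.
congr (_ + _); apply: eq_big_nat => t /andP[Ht1 Ht]; rewrite /coef.
  by rewrite -ltnS Ht.
by rewrite leqNgt Ht1.
Qed.

Lemma coef_eq (R : realFieldType) S t : (0 < S)%N -> (t <= S)%N ->
  coef R S t / 'C(S,t)%:R = (maxn t (S - t))%:R / S%:R.
Proof.
move=> S0 tS.
have nz : 'C(S,t)%:R != 0 :> R by rewrite pnatr_eq0 -lt0n bin_gt0.
have nzS : S%:R != 0 :> R by rewrite pnatr_eq0 -lt0n.
rewrite /coef; case: ifP => Ht.
  have -> : maxn t (S - t) = (S - t)%N by move: Ht; rewrite -divn2 => Ht; lia.
  apply/eqP; rewrite eqr_div // -!natrM eqr_nat mulnC mul_bin_down //.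
have t0 : (0 < t)%N by move: Ht; rewrite -divn2; lia.
have -> : maxn t (S - t) = t by move: Ht; rewrite -divn2 => Ht; lia.
apply/eqP; rewrite eqr_div // -!natrM eqr_nat mulnC mul_bin_diag prednK //.
Qed.

Theorem corollary2 (R : realFieldType) (L : nat) (a : 'I_L -> 'I_L -> bool)
  (s S : nat) (W : R) (gamma nustar : R) :
  (0 < L)%N -> (2 <= s)%N -> (s <= S)%N -> 0 <= W ->
  (forall (ks : 'I_s -> 'I_L) (b : 'I_s -> bool), injective ks ->
      (#|Aset a ks b|)%:R <= L%:R / 2 ^+ s + W) ->
  0 < gamma -> gamma < 1 ->
  lp_optimal S s (gamma * L%:R / (L%:R + 2 ^+ s * W)) nustar ->
  forall (T : {set 'I_L}) (g : 'I_L -> bool),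
    (#|T|)%:R = gamma * L%:R ->
    (forall ks : 'I_S -> 'I_L, injective ks ->
       exists i : 'I_S, (ncorrect a T g (ks i))%:R <= nustar * (L%:R + 2 ^+ s * W))
    /\ (#|[set k : 'I_L | (nustar * (L%:R + 2 ^+ s * W) < (ncorrect a T g k)%:R)%R]| < S)%N.
Proof.
move=> HL Hs HsS HW HA Hg0 Hg1 [_ Hopt] T g HT.
set L' := L%:R + 2 ^+ s * W.
have L'0 : 0 < L'.
  have : 0 < L%:R :> R by rewrite ltr0n.
  have : 0 <= 2 ^+ s * W :> R by rewrite mulr_ge0 // exprn_ge0.
  rewrite /L'; lra.
have S0 : (0 < S)%N by lia.
have part1 : forall ks : 'I_S -> 'I_L, injective ks ->
    exists i : 'I_S, (ncorrect a T g (ks i))%:R <= nustar * L'.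
  move=> ks injks.
  pose w := fun j => #|[set i | a (ks i) j]|.
  have wS : forall j, (w j <= S)%N.
    by move=> j; rewrite /w -[X in (_ <= X)%N](card_ord S) max_card.
  pose nu := nuf T w S L'.
  have Cnz : forall t, (t <= S)%N -> 'C(S,t)%:R != 0 :> R.
    by move=> t tS; rewrite pnatr_eq0 -lt0n bin_gt0.
  have feas : lp_feasible S s (gamma * L%:R / L') nu.
    split.
    - move=> t tS; rewrite /nu /nuf divr_ge0 //.
        by apply: sumr_ge0 => j _; rewrite /ef addr_ge0.
      by rewrite !mulr_ge0 // ltW.
    - move=> t tS; rewrite /nu /nuf bin_sub //; congr (_ / _); apply: eq_bigr => j _.
      have wj := wS j.
      have k1 : (w j == (S - t)%N) = ((S - w j)%N == t) by apply/eqP/eqP; lia.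
      have k2 : ((S - w j)%N == (S - t)%N) = (w j == t) by apply/eqP/eqP; lia.
      by rewrite /ef k1 k2 addrC.
    - have inner : forall j, \sum_(0 <= t < S.+1) ('C(S,t)%:R / 'C(S,t)%:R) * ef R S (w j) t = 2.
        move=> j; rewrite /ef; under eq_bigr do rewrite mulrDr.
        rewrite big_split /= !sum_pick ?leq_subr ?wS // !divff ?Cnz ?leq_subr ?wS //.
      rewrite /nu (@sum_nu _ _ T w S L' _ (fun t => 'C(S,t)%:R) (fun t => t)).
      under eq_bigr do rewrite inner.
      rewrite sumr_const -[_ *+ #|T|]mulr_natl HT; field.
      by rewrite /L'; apply: lt0r_neq0.
    - move=> h hs.
      have hsS : (h <= S)%N by lia.
      pose D := ('C(S,s) * 'C(s,h))%:R : R.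
      have Dnz : D != 0 by rewrite /D pnatr_eq0 muln_eq0 negb_or -!lt0n !bin_gt0 hs HsS.
      have inner : forall j, \sum_(0 <= t < (S - s).+1)
          ('C(S-s,t)%:R / 'C(S,(h+t)%N)%:R) * ef R S (w j) (h + t)%N =
          ('C(w j,h) * 'C(S - w j,s-h))%:R / D + ('C(w j, s - h) * 'C(S - w j, s - (s - h)))%:R / D.
        move=> j; rewrite /ef; under eq_bigr do rewrite mulrDr.
        rewrite big_split /= !shift_pick ?leq_subr ?wS //.
        by rewrite (subKn (wS j)) (subKn hs) /D; congr (_ + _); rewrite mulnC.
      rewrite /nu (@sum_nu _ _ T w S L' _ (fun t => 'C(S-s,t)%:R) (fun t => (h + t)%N)).
      under eq_bigr do rewrite inner.
      rewrite big_split /= -!mulr_suml.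
      have b1 := dc T hs injks HA.
      have b2 := dc T (leq_subr h s) injks HA.
      rewrite bin_sub // in b2.
      set B := L%:R / 2 ^+ s + W in b1 b2.
      apply: (@le_trans _ _ ((2 * L')^-1 * (B * 2))).
        rewrite ler_pM2l ?invr_gt0 ?mulr_gt0 //.
        rewrite -mulrDl ler_pdivrMr ?lt0r ?Dnz //; last by rewrite /D ler0n.
        rewrite (_ : B * 2 * D = D * B + D * B); last by ring.
        by apply: lerD; [exact: b1 | exact: b2].
      have E : (2 * L')^-1 * (B * 2) = 1 / 2 ^+ s.
        rewrite /B; move: L'0; rewrite /L' => H; field.
        by rewrite expf_neq0 // ?lt0r_neq0 //; apply: lt0r_neq0.
      by rewrite E.
  have Hle := Hopt nu feas.
  pose m := fun j => maxn (w j) (S - w j).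
  have obj : lp_obj S nu = (S%:R * L')^-1 * \sum_(j in T) (m j)%:R.
    have inner : forall j, \sum_(0 <= t < S.+1) (coef R S t / 'C(S,t)%:R) * ef R S (w j) t
        = 2 * ((m j)%:R / S%:R).
      move=> j; rewrite /ef; under eq_bigr do rewrite mulrDr.
      rewrite big_split /= !sum_pick ?leq_subr ?wS // !coef_eq ?leq_subr ?wS //.
      by rewrite subKn ?wS // (maxnC (S - w j)%N) /m; ring.
    rewrite obj_eq /nu (@sum_nu _ _ T w S L' _ (fun t => coef R S t) (fun t => t)).
    under eq_bigr do rewrite inner.
    rewrite -mulr_sumr -mulr_suml.
    have SnZ : S%:R != 0 :> R by rewrite pnatr_eq0 -lt0n.
    by field; rewrite SnZ andbT; apply: lt0r_neq0.
  have count : \sum_i (ncorrect a T g (ks i))%:R <= \sum_(j in T) (m j)%:R :> R.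
    rewrite -!natr_sum ler_nat /ncorrect.
    rewrite (card_swap (fun i j => (j \in T) && (g j == a (ks i) j))).
    rewrite [X in (_ <= X)%N]big_mkcond /=; apply: leq_sum => j _.
    case: (j \in T) => /=; last by rewrite card_set_pred big1.
    case: (g j).
      rewrite (_ : [set i | true == a (ks i) j] = [set i | a (ks i) j]); first exact: leq_maxl.
      by apply/setP => i; rewrite !inE; case: (a (ks i) j).
    rewrite (_ : [set i | false == a (ks i) j] = ~: [set i | a (ks i) j]).
      rewrite /m /w; have := cardsC [set i | a (ks i) j]; rewrite card_ord => E.
      apply: leq_trans (leq_maxr _ _); by rewrite -[X in (_ <= X - _)%N]E addKn.
    by apply/setP => i; rewrite !inE; case: (a (ks i) j).
  case: (boolP [exists i, (ncorrect a T g (ks i))%:R <= nustar * L']) => [/existsP // | /existsPn Hall].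
  exfalso.
  have lt : \sum_(i : 'I_S) (nustar * L') < \sum_i (ncorrect a T g (ks i))%:R.
    apply: ltr_sum; first by apply/hasP; exists (Ordinal S0); rewrite ?mem_index_enum.
    by move=> i _; rewrite ltNge; apply: Hall.
  rewrite sumr_const card_ord in lt.
  move: Hle; rewrite obj ler_pdivrMl ?mulr_gt0 ?ltr0n // => Hle.
  rewrite -[_ *+ S]mulr_natl in lt.
  have := lt_le_trans lt (le_trans count Hle).
  have E : S%:R * L' * nustar = S%:R * (nustar * L') by ring.
  by rewrite E ltxx.
split; first exact: part1.
rewrite ltnNge; apply/negP => HSK.
pose ks := fun l : 'I_S => enum_val (widen_ord HSK l).
have injks : injective ks.
  by move=> x y /enum_val_inj /(congr1 val) /= E; apply: val_inj.
have [i Hi] := part1 ks injks.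
have := enum_valP (widen_ord HSK i); rewrite inE => H.
by move: Hi; rewrite leNgt H.
Qed.
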